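(* For every term $s$, every $k\in\mathbb N$ and every heap-machine state $\sigma$, if $\sigma_s\succ^k\sigma$ then $|\sigma|\le(k+1)(3k+4|s|)$.
   Context: Terms (de Bruijn): $s::=n\mid st\mid\lambda s$ with size $|n|=1+n$, $|\lambda s|=1+|s|$, $|st|=1+|s|+|t|$. Programs: lists of commands $\mathsf{ret},\mathsf{var}\,n,\mathsf{lam},\mathsf{app}$, sizes $|\mathsf{var}\,n|=1+n$, $|c|=1$ otherwise, $|P|=1+\sum_{c\in P}|c|$. Compilation: $\gamma n=[\mathsf{var}\,n]$, $\gamma(st)=\gamma s++\gamma t++[\mathsf{app}]$, $\gamma(\lambda s)=\mathsf{lam}::\gamma s++[\mathsf{ret}]$. $\varphi P:=\varphi_{0,[]}P$ with $\varphi_{0,Q}(\mathsf{ret}::P)=(Q,P)$, $\varphi_{k+1,Q}(\mathsf{ret}::P)=\varphi_{k,Q++[\mathsf{ret}]}P$, $\varphi_{k,Q}(\mathsf{lam}::P)=\varphi_{k+1,Q++[\mathsf{lam}]}P$, $\varphi_{k,Q}(c::P)=\varphi_{k,Q++[c]}P$ for $c$ a $\mathsf{var}$ or $\mathsf{app}$, undefined otherwise. Addresses are natural numbers; a closure is a pair $(P,a)$ (program, address); a heap entry is a pair $(g,b)$ (closure, address); a heap $H$ is a list of heap entries; $H[a]$ is the $a$-th entry for $1\le a\le|H|$, undefined otherwise. Lookup: if $H[a]=(g,b)$ then $H[a,0]=g$ and $H[a,n+1]=H[b,n]$; else undefined. Heap machine: states $(T,V,H)$ with $T,V$ lists of closures;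 steps $((\mathsf{var}\,n::P,a)::T,V,H)\succ((P,a)::T,g::V,H)$ if $H[a,n]=g$; $((\mathsf{lam}::P,a)::T,V,H)\succ((P',a)::T,(Q,a)::V,H)$ if $\varphi P=(Q,P')$; $((\mathsf{app}::P,a)::T,g::(Q,b)::V,H)\succ((Q,|H|+1)::(P,a)::T,V,H++[(g,b)])$; $(([],a)::T,V,H)\succ(T,V,H)$. Initial state $\sigma_s:=([(\gamma s,0)],[],[])$. Sizes: $|(P,a)|=|P|+a$ for closures, $|(g,b)|=|g|+b$ for heap entries, and the size of a state $(T,V,H)$ is the sum of the sizes of all closures in $T$ and $V$ and all entries in $H$. *)

(* Defs.v *)
From Stdlib Require Import List Arith Lia.
Import ListNotations.

(* de Bruijn terms *)
Inductive term : Type :=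
| tvar : nat -> term
| tapp : term -> term -> term
| tlam : term -> term.

Fixpoint term_size (s : term) : nat :=
  match s with
  | tvar n => 1 + n
  | tapp s t => 1 + term_size s + term_size t
  | tlam s => 1 + term_size s
  end.

Inductive com : Type := retC | varC (n : nat) | lamC | appC.
Definition prog := list com.

Definition com_size (c : com) : nat :=
  match c with varC n => 1 + n | _ => 1 end.

Definition prog_size (P : prog) : nat := 1 + fold_right (fun c acc => com_size c + acc) 0 P.

Fixpoint compile (s : term) : prog :=
  match s with
  | tvar n => [varC n]
  | tapp s t => compile s ++ compile t ++ [appC]
  | tlam s => lamC :: compile s ++ [retC]
  end.

Fixpoint phi_aux (k : nat) (Q : prog) (P : prog) : option (prog * prog) :=
  match P with
  | [] => None
  | retC :: P' => match k with
                  | 0 => Some (Q, P')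
                  | S k' => phi_aux k' (Q ++ [retC]) P'
                  end
  | lamC :: P' => phi_aux (S k) (Q ++ [lamC]) P'
  | c :: P' => phi_aux k (Q ++ [c]) P'
  end.

Definition phi (P : prog) : option (prog * prog) := phi_aux 0 [] P.

Definition closure := (prog * nat)%type.
Definition heapEntry := (closure * nat)%type.
Definition heap := list heapEntry.

(* H[a], defined for 1 <= a <= |H| *)
Definition heap_get (H : heap) (a : nat) : option heapEntry :=
  match a with
  | 0 => None
  | S a' => nth_error H a'
  end.

Fixpoint lookup (H : heap) (a : nat) (n : nat) : option closure :=
  match heap_get H a with
  | None => None
  | Some (g, b) => match n with
                   | 0 => Some g
                   | S n' => lookup H b n'
                   end
  end.

Definition state := (list closure * list closure * heap)%type.

Inductive step : state -> state -> Prop :=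
| step_var : forall n P a T V H g,
    lookup H a n = Some g ->
    step ((varC n :: P, a) :: T, V, H) ((P, a) :: T, g :: V, H)
| step_lam : forall P a T V H Q P',
    phi P = Some (Q, P') ->
    step ((lamC :: P, a) :: T, V, H) ((P', a) :: T, (Q, a) :: V, H)
| step_app : forall P a T g Q b V H,
    step ((appC :: P, a) :: T, g :: (Q, b) :: V, H)
         ((Q, S (length H)) :: (P, a) :: T, V, H ++ [(g, b)])
| step_nil : forall a T V H,
    step (([], a) :: T, V, H) (T, V, H).

Inductive steps : nat -> state -> state -> Prop :=
| steps_refl : forall s, steps 0 s s
| steps_step : forall k s1 s2 s3, step s1 s2 -> steps k s2 s3 -> steps (S k) s1 s3.

Definition init_state (s : term) : state := ([(compile s, 0)], [], []).

Definition closure_size (c : closure) : nat := prog_size (fst c) + snd c.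
Definition entry_size (e : heapEntry) : nat := closure_size (fst e) + snd e.

Definition state_size (st : state) : nat :=
  match st with
  | (T, V, H) =>
      fold_right (fun c acc => closure_size c + acc) 0 T
      + fold_right (fun c acc => closure_size c + acc) 0 V
      + fold_right (fun e acc => entry_size e + acc) 0 H
  end.

(* Main.v *)
Require Import Defs.
From Stdlib Require Import List Arith Lia.
Import ListNotations.

Definition sz (P : prog) : nat := fold_right (fun c acc => com_size c + acc) 0 P.

Lemma sz_app : forall P Q, sz (P ++ Q) = sz P + sz Q.
Proof. induction P; intros; simpl; auto. unfold sz in *. simpl. rewrite IHP. lia. Qed.

Lemma sz_compile : forall s, sz (compile s) <= 2 * term_size s.
Proof.
  induction s; simpl.
  - unfold sz; simpl; lia.
  - rewrite !sz_app. unfold sz at 3; simpl. lia.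
  - change (sz (lamC :: compile s ++ [retC])) with (1 + sz (compile s ++ [retC])).
    rewrite sz_app. unfold sz at 2; simpl. lia.
Qed.

Lemma phi_aux_sz : forall P k Q Q' P', phi_aux k Q P = Some (Q', P') ->
  sz Q' + sz P' <= sz Q + sz P.
Proof.
  induction P as [|c P IH]; intros k Q Q' P' Hp; simpl in Hp; [discriminate|].
  destruct c.
  - destruct k.
    + inversion Hp; subst. change (sz (retC :: P')) with (1 + sz P'). lia.
    + apply IH in Hp. rewrite sz_app in Hp. change (sz (retC :: P)) with (1 + sz P).
      unfold sz in *; simpl in *; lia.
  - apply IH in Hp. rewrite sz_app in Hp. change (sz (varC n :: P)) with (1 + n + sz P).
    unfold sz in *; simpl in *; lia.
  - apply IH in Hp. rewrite sz_app in Hp. change (sz (lamC :: P)) with (1 + sz P).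
    unfold sz in *; simpl in *; lia.
  - apply IH in Hp. rewrite sz_app in Hp. change (sz (appC :: P)) with (1 + sz P).
    unfold sz in *; simpl in *; lia.
Qed.

Lemma lookup_in : forall n H a g, lookup H a n = Some g -> exists e, In e H /\ fst e = g.
Proof.
  induction n; intros H a g Hl; simpl in Hl; destruct (heap_get H a) as [[g' b]|] eqn:E;
    try discriminate.
  - inversion Hl; subst. destruct a; simpl in E; [discriminate|].
    exists (g, b). split; auto. eapply nth_error_In; eauto.
  - eauto.
Qed.

Definition cl_ok (M h : nat) (c : closure) := prog_size (fst c) <= M /\ snd c <= h.
Definition en_ok (M h : nat) (e : heapEntry) := cl_ok M h (fst e) /\ snd e <= h.

Definition Inv (M k : nat) (st : state) : Prop :=
  match st with (T, V, H) =>
    length T + length V + length H <= k + 1 /\ length H <= k /\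
    Forall (cl_ok M (length H)) T /\ Forall (cl_ok M (length H)) V /\
    Forall (en_ok M (length H)) H
  end.

Lemma cl_mono : forall M h h' l, h <= h' -> Forall (cl_ok M h) l -> Forall (cl_ok M h') l.
Proof. intros. eapply Forall_impl; [|eauto]. unfold cl_ok; intros; lia. Qed.
Lemma en_mono : forall M h h' l, h <= h' -> Forall (en_ok M h) l -> Forall (en_ok M h') l.
Proof. intros. eapply Forall_impl; [|eauto]. unfold en_ok, cl_ok; intros; lia. Qed.

Lemma step_inv : forall M k st st', Inv M k st -> step st st' -> Inv M (S k) st'.
Proof.
  intros M k st st' HI Hs. destruct Hs; simpl in *;
    destruct HI as (H1 & H2 & HT & HV & HH).
  - inversion HT; subst. destruct (lookup_in _ _ _ _ H0) as (e & Hin & He).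
    pose proof HH as HH'. rewrite Forall_forall in HH'. specialize (HH' e Hin).
    destruct HH' as [Hc _]. subst.
    unfold cl_ok in *; simpl in *. unfold prog_size in *; simpl in *.
    repeat split; try lia; auto. constructor; auto; simpl; lia.
  - inversion HT; subst. unfold cl_ok in *; simpl in *.
    apply phi_aux_sz in H0. unfold prog_size in *. fold sz in *.
    change (sz (lamC :: P)) with (1 + sz P) in *. unfold sz in *. cbn [fold_right com_size] in *.
    repeat split; try lia; try constructor; auto; simpl; try lia.
  - repeat match goal with Hf : Forall _ (_ :: _) |- _ => inversion Hf; subst; clear Hf end.
    unfold cl_ok in *; simpl in *. rewrite length_app; simpl.
    repeat match goal with Hc : _ /\ _ |- _ => destruct Hc end.
    unfold prog_size in *; simpl in *.
    repeat split; try lia.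
    + constructor; [split; simpl; lia|]. constructor.
      * simpl; lia.
      * eapply cl_mono; [|eassumption]; lia.
    + eapply cl_mono; [|eassumption]; lia.
    + apply Forall_app; split.
      * eapply en_mono; [|eassumption]; lia.
      * constructor; [|constructor]. unfold en_ok, cl_ok, prog_size in *; simpl in *; lia.
  - inversion HT; subst. repeat split; auto; lia.
Qed.

Lemma steps_inv : forall j st st', steps j st st' -> forall M i, Inv M i st -> Inv M (i + j) st'.
Proof.
  induction 1; intros M i HI.
  - rewrite Nat.add_0_r; auto.
  - replace (i + S k) with (S i + k) by lia. apply IHsteps. eapply step_inv; eauto.
Qed.

Lemma fold_cl : forall B h M l, Forall (cl_ok M h) l -> M + h <= B ->
  fold_right (fun c acc => closure_size c + acc) 0 l <= length l * B.
Proof.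
  induction l; cbn [fold_right length]; intros F Hb; auto. inversion F; subst.
  specialize (IHl H2 Hb). assert (closure_size a <= B) by (unfold cl_ok, closure_size in *; lia). lia.
Qed.

Lemma fold_en : forall B h M l, Forall (en_ok M h) l -> M + 2 * h <= B ->
  fold_right (fun e acc => entry_size e + acc) 0 l <= length l * B.
Proof.
  induction l; cbn [fold_right length]; intros F Hb; auto. inversion F; subst.
  specialize (IHl H2 Hb). assert (entry_size a <= B) by (unfold en_ok, cl_ok, entry_size, closure_size in *; lia). lia.
Qed.

Theorem theorem17 (s : term) (k : nat) (sigma : state) :
  steps k (init_state s) sigma ->
  state_size sigma <= (k + 1) * (3 * k + 4 * term_size s).
Proof.
  intros Hs.
  set (M := prog_size (compile s)).
  assert (HI : Inv M 0 (init_state s)).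
  { simpl. repeat split; auto; try lia. constructor; [|constructor].
    unfold cl_ok; simpl; lia. }
  apply (steps_inv _ _ _ Hs) in HI. simpl in HI.
  destruct sigma as [[T V] H].
  destruct HI as (H1 & H2 & HT & HV & HH).
  assert (HM : M <= 1 + 2 * term_size s).
  { unfold M. change (prog_size (compile s)) with (1 + sz (compile s)). pose proof (sz_compile s). lia. }
  assert (Hts : 1 <= term_size s) by (destruct s; simpl; lia).
  pose proof (fold_cl (M + 2 * k) _ _ _ HT ltac:(lia)).
  pose proof (fold_cl (M + 2 * k) _ _ _ HV ltac:(lia)).
  pose proof (fold_en (M + 2 * k) _ _ _ HH ltac:(lia)).
  unfold state_size.
  assert (Hfin : (length T + length V + length H) * (M + 2 * k) <= (k + 1) * (3 * k + 4 * term_size s)).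
  { apply Nat.mul_le_mono; lia. }
  rewrite !Nat.mul_add_distr_r in Hfin.
  lia.
Qed.
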